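(* Let $T<\infty$ and $\Delta_T=\{(s,t):0\le t\le s\le T\}$. There exists at most one solution $(R,C,q,K,H)\in\mathcal C_b^1(\Delta_T)^2\times\mathcal C_b^1([0,T])^3$ (with $C$ extended to $[0,T]^2$ by $C(s,t)=C(t,s)$) of the equations, for $(s,t)\in\Delta_T$, \begin{align*} \partial_sR(s,t)&=-f'(K(s))R(s,t)+\int_t^sR(u,t)R(s,u)\nu''(C(s,u))du,\\ \partial_sC(s,t)&=-f'(K(s))C(s,t)+\int_0^sR(s,u)\Big[\nu''(C(s,u))C(u,t)-\frac{q(t)\nu'(q(u))\nu''(q(s))}{\nu'(q_\star^2)}\Big]du\\&\quad+\int_0^tR(t,u)\Big[\nu'(C(s,u))-\frac{\nu'(q(s))\nu'(q(u))}{\nu'(q_\star^2)}\Big]du+q(t){\mathsf v}_\star'(q(s)),\\ \partial_sq(s)&=-f'(K(s))q(s)+\int_0^sR(s,u)\Big[q(u)\nu''(C(s,u))-\frac{q_\star^2\nu'(q(u))\nu''(q(s))}{\nu'(q_\star^2)}\Big]du+q_\star^2{\mathsf v}_\star'(q(s)),\\ \partial_sK(s)&=1-2f'(K(s))K(s)+2\int_0^sR(s,u)\Big[\psi(C(s,u))-\frac{\psi(q(s))\nu'(q(u))}{\nu'(q_\star^2)}\Big]du+2q(s){\mathsf v}_\star'(q(s)),\\ H(s)&=\int_0^sR(s,u)\Big[\nu'(C(s,u))-\frac{\nu'(q(s))\nu'(q(u))}{\nu'(q_\star^2)}\Big]du+{\mathsf v}_\star(q(s)), \end{align*} with boundary conditions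 $R(s,s)=1$ and $C(s,s)=K(s)$ for all $s\in[0,T]$, and $K(0)=1$, $q(0)=q_o$ given.
   Context: $m\ge2$, $b_2,\dots,b_m$ real with $b_m\ne0$, $\nu(r)=\sum_{p=2}^mb_p^2r^p$, $\psi(r)=r\nu''(r)+\nu'(r)$; $q_\star>0$, $q_o$ a real number, $E_\star,G_\star$ reals (with $G_\star=mE_\star/q_\star^2$ if $\nu(r)=b_m^2r^m$, the pure case). In the mixed case (any other $\nu$) ${\mathsf v}_p=\begin{bmatrix}q_\star^2\nu(q_\star^2)&q_\star^2\nu'(q_\star^2)\\ q_\star^2\nu'(q_\star^2)&\psi(q_\star^2)\end{bmatrix}^{-1}\begin{bmatrix}q_\star^2\\ p\end{bmatrix}$ and ${\mathsf v}_\star(r)=\sum_{p=2}^mb_p^2\langle{\mathsf v}_p,(E_\star,G_\star)\rangle r^p$; in the pure case ${\mathsf v}_\star(r)=E_\star q_\star^{-2m}r^m$. $f:[0,\infty)\to\mathbb R$ is differentiable with $f'$ locally Lipschitz, $\inf_{r\ge0}\{f'(r)-Ar^{2k-1}\}>-\infty$ for some $A>0,k>m/4$, and $\sup_r|f'(r)|(1+r)^{-\kappa}<\infty$ for some $\kappa$. $\mathcal C_b^1$ denotes bounded continuously differentiable functions. *)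

(* Defs.v *)
From Stdlib Require Import Reals Lra ClassicalDescription.
From Coquelicot Require Import Coquelicot.
Open Scope R_scope.

Definition is_deriv_within (D : R -> Prop) (g : R -> R) (x l : R) : Prop :=
  filterlim (fun y => (g y - g x) / (y - x))
            (within (fun y => D y /\ y <> x) (locally x)) (locally l).

Definition cont_within (D : R -> Prop) (g : R -> R) (x : R) : Prop :=
  filterlim g (within D (locally x)) (locally (g x)).

Definition cont2_within (D : R * R -> Prop) (g : R -> R -> R) (s t : R) : Prop :=
  filterlim (fun p : R * R => g (fst p) (snd p))
            (within D (locally (s, t))) (locally (g s t)).

Definition I0T (T : R) (s : R) : Prop := 0 <= s <= T.
Definition DeltaT (T : R) (p : R * R) : Prop := 0 <= snd p <= fst p /\ fst p <= T.

Definition C1b_interval (T : R) (g : R -> R) : Prop :=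
  exists g' : R -> R,
    (forall s, I0T T s -> is_deriv_within (I0T T) g s (g' s)) /\
    (forall s, I0T T s -> cont_within (I0T T) g' s) /\
    (exists M, forall s, I0T T s -> Rabs (g s) <= M /\ Rabs (g' s) <= M).

Definition C1b_triangle (T : R) (g : R -> R -> R) : Prop :=
  exists gs gt : R -> R -> R,
    (forall s t, DeltaT T (s, t) ->
       is_deriv_within (fun s' => DeltaT T (s', t)) (fun s' => g s' t) s (gs s t)) /\
    (forall s t, DeltaT T (s, t) ->
       is_deriv_within (fun t' => DeltaT T (s, t')) (fun t' => g s t') t (gt s t)) /\
    (forall s t, DeltaT T (s, t) ->
       cont2_within (DeltaT T) g s t /\ cont2_within (DeltaT T) gs s t /\
       cont2_within (DeltaT T) gt s t) /\
    (exists M, forall s t, DeltaT T (s, t) ->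
       Rabs (g s t) <= M /\ Rabs (gs s t) <= M /\ Rabs (gt s t) <= M).

Definition Csym (C : R -> R -> R) (s t : R) : R :=
  if Rle_dec t s then C s t else C t s.

Definition nu (m : nat) (b : nat -> R) (r : R) : R :=
  sum_n_m (fun p => b p ^ 2 * r ^ p) 2 m.
Definition nu1 (m : nat) (b : nat -> R) (r : R) : R :=
  sum_n_m (fun p => INR p * b p ^ 2 * r ^ (p - 1)) 2 m.
Definition nu2 (m : nat) (b : nat -> R) (r : R) : R :=
  sum_n_m (fun p => INR p * INR (p - 1) * b p ^ 2 * r ^ (p - 2)) 2 m.
Definition psi (m : nat) (b : nat -> R) (r : R) : R :=
  r * nu2 m b r + nu1 m b r.

Definition is_pure (m : nat) (b : nat -> R) : Prop :=
  forall r, nu m b r = b m ^ 2 * r ^ m.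

(** Mixed case: <v_p, (E,G)> where
    v_p = [[x nu(x), x nu'(x)], [x nu'(x), psi(x)]]^{-1} [x; p], x = q_star^2
    (explicit 2x2 inverse). *)
Definition vcoef (m : nat) (b : nat -> R) (qs E G : R) (p : nat) : R :=
  let x := qs ^ 2 in
  let a := x * nu m b x in
  let bb := x * nu1 m b x in
  let c := psi m b x in
  let det := a * c - bb * bb in
  / det * ((c * x - bb * INR p) * E + (a * INR p - bb * x) * G).

Definition vstar (m : nat) (b : nat -> R) (qs E G : R) (r : R) : R :=
  if excluded_middle_informative (is_pure m b)
  then E * / qs ^ (2 * m) * r ^ m
  else sum_n_m (fun p => b p ^ 2 * vcoef m b qs E G p * r ^ p) 2 m.

Definition vstar1 (m : nat) (b : nat -> R) (qs E G : R) (r : R) : R :=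
  if excluded_middle_informative (is_pure m b)
  then E * / qs ^ (2 * m) * INR m * r ^ (m - 1)
  else sum_n_m (fun p => INR p * b p ^ 2 * vcoef m b qs E G p * r ^ (p - 1)) 2 m.

(** r^e for r >= 0 and real e > 0 (0^e = 0). *)
Definition rpow (r e : R) : R := if Rlt_dec 0 r then Rpower r e else 0.

Definition f_assumptions (m : nat) (f fp : R -> R) : Prop :=
  (forall r, 0 <= r -> is_deriv_within (fun x => 0 <= x) f r (fp r)) /\
  (forall x, 0 <= x -> exists delta L, 0 < delta /\
     forall y z, 0 <= y -> 0 <= z -> Rabs (y - x) < delta -> Rabs (z - x) < delta ->
       Rabs (fp y - fp z) <= L * Rabs (y - z)) /\
  (exists A k, 0 < A /\ INR m / 4 < k /\
     exists L, forall r, 0 <= r -> L <= fp r - A * rpow r (2 * k - 1)) /\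
  (exists kappa M, forall r, 0 <= r -> Rabs (fp r) * Rpower (1 + r) (- kappa) <= M).

(** (R,C,q,K,H) in C_b^1(Delta_T)^2 x C_b^1([0,T])^3 solves the system
    (K(s) >= 0 is required so that f'(K(s)) is meaningful, f being defined
    on [0,oo)). *)
Definition is_solution (m : nat) (b : nat -> R) (qs qo E G : R) (fp : R -> R) (T : R)
  (Rf C : R -> R -> R) (q K H : R -> R) : Prop :=
  let n1 := nu1 m b in
  let n2 := nu2 m b in
  let ps := psi m b in
  let x := qs ^ 2 in
  let vs := vstar m b qs E G in
  let vs1 := vstar1 m b qs E G in
  let Cs := Csym C in
  C1b_triangle T Rf /\ C1b_triangle T C /\
  C1b_interval T q /\ C1b_interval T K /\ C1b_interval T H /\
  (forall s, I0T T s -> 0 <= K s) /\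
  (forall s t, DeltaT T (s, t) ->
     is_deriv_within (fun s' => DeltaT T (s', t)) (fun s' => Rf s' t) s
       (- fp (K s) * Rf s t
        + RInt (fun u => Rf u t * Rf s u * n2 (Cs s u)) t s)) /\
  (forall s t, DeltaT T (s, t) ->
     is_deriv_within (fun s' => DeltaT T (s', t)) (fun s' => C s' t) s
       (- fp (K s) * C s t
        + RInt (fun u => Rf s u * (n2 (Cs s u) * Cs u t
                                   - q t * n1 (q u) * n2 (q s) / n1 x)) 0 s
        + RInt (fun u => Rf t u * (n1 (Cs s u) - n1 (q s) * n1 (q u) / n1 x)) 0 t
        + q t * vs1 (q s))) /\
  (forall s, I0T T s ->
     is_deriv_within (I0T T) q s
       (- fp (K s) * q s
        + RInt (fun u => Rf s u * (q u * n2 (Cs s u)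
                                   - x * n1 (q u) * n2 (q s) / n1 x)) 0 s
        + x * vs1 (q s))) /\
  (forall s, I0T T s ->
     is_deriv_within (I0T T) K s
       (1 - 2 * fp (K s) * K s
        + 2 * RInt (fun u => Rf s u * (ps (Cs s u) - ps (q s) * n1 (q u) / n1 x)) 0 s
        + 2 * q s * vs1 (q s))) /\
  (forall s, I0T T s ->
     H s = RInt (fun u => Rf s u * (n1 (Cs s u) - n1 (q s) * n1 (q u) / n1 x)) 0 s
           + vs (q s)) /\
  (forall s, I0T T s -> Rf s s = 1 /\ C s s = K s) /\
  K 0 = 1 /\ q 0 = qo.

(* Main.v *)
Require Import Defs.
From Stdlib Require Import Reals Lra Lia Arith ClassicalDescription.
From Coquelicot Require Import Coquelicot.
Open Scope R_scope.

Lemma ballR x e y : ball x e y <-> Rabs (y - x) < e.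
Proof. reflexivity. Qed.

Definition ctw (D : R -> Prop) (g : R -> R) (x : R) : Prop :=
  forall eps, 0 < eps -> exists del, 0 < del /\
    forall y, D y -> Rabs (y - x) < del -> Rabs (g y - g x) < eps.

Definition derw (D : R -> Prop) (g : R -> R) (x l : R) : Prop :=
  forall eps, 0 < eps -> exists del, 0 < del /\
    forall y, D y -> y <> x -> Rabs (y - x) < del ->
      Rabs ((g y - g x) / (y - x) - l) < eps.

Lemma deriv_derw D g x l : is_deriv_within D g x l -> derw D g x l.
Proof.
  intros H eps Heps.
  destruct (proj1 (filterlim_locally _ _) H (mkposreal eps Heps)) as [d Hd].
  exists d; split; [apply cond_pos|].
  intros y Dy Hyx Hy. apply (Hd y); [apply ballR; exact Hy| split; auto].
Qed.

Lemma derw_ctw D g x l : D x -> derw D g x l -> ctw D g x.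
Proof.
  intros Dx H eps Heps.
  destruct (H 1 Rlt_0_1) as [d [Hd Hd']].
  exists (Rmin d (eps / (Rabs l + 1))). split.
  { apply Rmin_pos; auto. apply Rdiv_lt_0_compat; auto.
    pose proof (Rabs_pos l); lra. }
  intros y Dy Hy.
  destruct (Req_dec y x) as [->|Hne].
  { rewrite Rminus_diag, Rabs_R0; auto. }
  assert (Hy1 : Rabs (y - x) < d) by (eapply Rlt_le_trans; [exact Hy| apply Rmin_l]).
  assert (Hy2 : Rabs (y - x) < eps / (Rabs l + 1)) by (eapply Rlt_le_trans; [exact Hy| apply Rmin_r]).
  specialize (Hd' y Dy Hne Hy1).
  assert (Hyx : y - x <> 0) by lra.
  replace (g y - g x) with ((g y - g x) / (y - x) * (y - x)) by (field; auto).
  rewrite Rabs_mult.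
  assert (Rabs ((g y - g x) / (y - x)) <= Rabs l + 1).
  { replace ((g y - g x) / (y - x)) with (((g y - g x) / (y - x) - l) + l) by ring.
    eapply Rle_trans; [apply Rabs_triang|]. lra. }
  assert (Hpos : 0 < Rabs l + 1) by (pose proof (Rabs_pos l); lra).
  apply Rle_lt_trans with ((Rabs l + 1) * Rabs (y - x)).
  { apply Rmult_le_compat_r; [apply Rabs_pos| auto]. }
  apply Rmult_lt_reg_l with (/ (Rabs l + 1)). apply Rinv_0_lt_compat; auto.
  rewrite <- Rmult_assoc, Rinv_l, Rmult_1_l by lra.
  unfold Rdiv in Hy2. rewrite Rmult_comm. exact Hy2.
Qed.
Lemma ctw_sub (D D' : R -> Prop) g x : (forall y, D' y -> D y) -> ctw D g x -> ctw D' g x.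
Proof.
  intros HS H eps He. destruct (H eps He) as [d [Hd H']]. exists d; split; auto.
Qed.

Lemma ctw_ext (D : R -> Prop) g g' x : D x -> (forall y, D y -> g y = g' y) -> ctw D g x -> ctw D g' x.
Proof.
  intros Dx HE H eps He. destruct (H eps He) as [d [Hd H']]. exists d; split; auto.
  intros y Dy Hy. rewrite <- !HE; auto.
Qed.

Lemma ctw_const D k x : ctw D (fun _ => k) x.
Proof. intros eps He. exists 1; split; [lra|]. intros. rewrite Rminus_diag, Rabs_R0; auto. Qed.

Lemma ctw_id D x : ctw D (fun y => y) x.
Proof. intros eps He. exists eps; split; auto. Qed.

Lemma ctw_plus D f g x : ctw D f x -> ctw D g x -> ctw D (fun y => f y + g y) x.
Proof.
  intros Hf Hg eps He.
  destruct (Hf (eps/2)) as [d1 [H1 H1']]; [lra|].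
  destruct (Hg (eps/2)) as [d2 [H2 H2']]; [lra|].
  exists (Rmin d1 d2); split; [apply Rmin_pos; auto|].
  intros y Dy Hy.
  assert (Rabs (y - x) < d1) by (eapply Rlt_le_trans; [exact Hy|apply Rmin_l]).
  assert (Rabs (y - x) < d2) by (eapply Rlt_le_trans; [exact Hy|apply Rmin_r]).
  specialize (H1' y Dy H). specialize (H2' y Dy H0).
  replace (f y + g y - (f x + g x)) with ((f y - f x) + (g y - g x)) by ring.
  eapply Rle_lt_trans; [apply Rabs_triang|]. lra.
Qed.

Lemma ctw_opp D f x : ctw D f x -> ctw D (fun y => - f y) x.
Proof.
  intros Hf eps He. destruct (Hf eps He) as [d [Hd H]]. exists d; split; auto.
  intros y Dy Hy. replace (- f y - - f x) with (- (f y - f x)) by ring.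
  rewrite Rabs_Ropp; auto.
Qed.

Lemma ctw_minus D f g x : ctw D f x -> ctw D g x -> ctw D (fun y => f y - g y) x.
Proof. intros Hf Hg. apply (ctw_plus D f (fun y => - g y)); auto. apply ctw_opp; auto. Qed.

Definition ctp (h : R -> R) (z : R) : Prop :=
  forall eps, 0 < eps -> exists del, 0 < del /\
    forall w, Rabs (w - z) < del -> Rabs (h w - h z) < eps.

Lemma ctw_comp D g h x : ctw D g x -> ctp h (g x) -> ctw D (fun y => h (g y)) x.
Proof.
  intros Hg Hh eps He. destruct (Hh eps He) as [d [Hd H]].
  destruct (Hg d Hd) as [d' [Hd' H']]. exists d'; split; auto.
Qed.

Lemma ctp_mult a b : ctp (fun w => w * b) a.
Proof.
  intros eps He. exists (eps / (Rabs b + 1)). split.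
  { apply Rdiv_lt_0_compat; auto. pose proof (Rabs_pos b); lra. }
  intros w Hw. replace (w * b - a * b) with ((w - a) * b) by ring.
  rewrite Rabs_mult.
  assert (Hpos : 0 < Rabs b + 1) by (pose proof (Rabs_pos b); lra).
  apply Rle_lt_trans with (Rabs (w - a) * (Rabs b + 1)).
  { apply Rmult_le_compat_l; [apply Rabs_pos|lra]. }
  apply Rmult_lt_reg_r with (/ (Rabs b + 1)). apply Rinv_0_lt_compat; auto.
  rewrite Rmult_assoc, Rinv_r, Rmult_1_r by lra. exact Hw.
Qed.

Lemma ctw_mult D f g x : ctw D f x -> ctw D g x -> ctw D (fun y => f y * g y) x.
Proof.
  intros Hf Hg.
  assert (Hb : exists d, 0 < d /\ forall y, D y -> Rabs (y - x) < d -> Rabs (f y) <= Rabs (f x) + 1).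
  { destruct (Hf 1 Rlt_0_1) as [d [Hd H]]. exists d; split; auto. intros y Dy Hy.
    specialize (H y Dy Hy). replace (f y) with ((f y - f x) + f x) by ring.
    eapply Rle_trans; [apply Rabs_triang|]. lra. }
  destruct Hb as [d0 [Hd0 Hb]].
  intros eps He.
  set (A := Rabs (f x) + 1). set (Bv := Rabs (g x) + 1).
  assert (HA : 0 < A) by (unfold A; pose proof (Rabs_pos (f x)); lra).
  assert (HB : 0 < Bv) by (unfold Bv; pose proof (Rabs_pos (g x)); lra).
  destruct (Hg (eps / (2 * A))) as [d1 [H1 H1']].
  { apply Rdiv_lt_0_compat; lra. }
  destruct (Hf (eps / (2 * Bv))) as [d2 [H2 H2']].
  { apply Rdiv_lt_0_compat; lra. }
  exists (Rmin d0 (Rmin d1 d2)). split; [repeat apply Rmin_pos; auto|].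
  intros y Dy Hy.
  assert (Hy0 : Rabs (y - x) < d0) by (eapply Rlt_le_trans; [exact Hy|apply Rmin_l]).
  assert (Hy12 : Rabs (y - x) < Rmin d1 d2) by (eapply Rlt_le_trans; [exact Hy|apply Rmin_r]).
  assert (Hy1 : Rabs (y - x) < d1) by (eapply Rlt_le_trans; [exact Hy12|apply Rmin_l]).
  assert (Hy2 : Rabs (y - x) < d2) by (eapply Rlt_le_trans; [exact Hy12|apply Rmin_r]).
  specialize (Hb y Dy Hy0). specialize (H1' y Dy Hy1). specialize (H2' y Dy Hy2).
  replace (f y * g y - f x * g x) with (f y * (g y - g x) + (f y - f x) * g x) by ring.
  eapply Rle_lt_trans; [apply Rabs_triang|]. rewrite !Rabs_mult.
  assert (E1 : Rabs (f y) * Rabs (g y - g x) <= A * (eps / (2 * A))).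
  { apply Rmult_le_compat; try apply Rabs_pos; fold A in Hb; lra. }
  assert (E2 : Rabs (f y - f x) * Rabs (g x) < (eps / (2 * Bv)) * Bv).
  { apply Rle_lt_trans with (Rabs (f y - f x) * Bv).
    apply Rmult_le_compat_l; [apply Rabs_pos|unfold Bv; lra].
    apply Rmult_lt_compat_r; lra. }
  assert (A * (eps / (2 * A)) = eps / 2) by (field; lra).
  assert ((eps / (2 * Bv)) * Bv = eps / 2) by (field; lra).
  lra.
Qed.
Definition clamp (a b x : R) := Rmax a (Rmin b x).

Lemma clamp_in a b x : a <= b -> a <= clamp a b x <= b.
Proof. intros. unfold clamp, Rmax, Rmin. repeat destruct Rle_dec; lra. Qed.

Lemma clamp_id a b x : a <= x <= b -> clamp a b x = x.
Proof. intros. unfold clamp, Rmax, Rmin. repeat destruct Rle_dec; lra. Qed.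

Lemma clamp_lip a b x y : a <= b -> Rabs (clamp a b y - clamp a b x) <= Rabs (y - x).
Proof. intros. unfold clamp, Rmax, Rmin. repeat destruct Rle_dec; unfold Rabs; repeat destruct Rcase_abs; lra. Qed.

Lemma clamp_cont a b g z : a <= b ->
  (forall x, a <= x <= b -> ctw (fun y => a <= y <= b) g x) ->
  continuous (fun y => g (clamp a b y)) z.
Proof.
  intros Hab H. apply filterlim_locally. intros eps.
  destruct (H (clamp a b z) (clamp_in a b z Hab) eps (cond_pos eps)) as [d [Hd H']].
  exists (mkposreal d Hd). intros y Hy. apply ballR in Hy. apply ballR. simpl in Hy.
  apply H'. apply clamp_in; auto.
  eapply Rle_lt_trans; [apply clamp_lip; auto| exact Hy].
Qed.

Lemma ex_RInt_ctw f lo hi : lo <= hi ->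
  (forall x, lo <= x <= hi -> ctw (fun y => lo <= y <= hi) f x) -> ex_RInt f lo hi.
Proof.
  intros Hab H.
  apply ex_RInt_ext with (fun y => f (clamp lo hi y)).
  { intros x Hx. rewrite Rmin_left, Rmax_right in Hx by auto. rewrite clamp_id; auto; lra. }
  apply (@ex_RInt_continuous R_CompleteNormedModule). intros z _. apply clamp_cont; auto.
Qed.

Lemma mvt_bound g g' a b B : a <= b ->
  (forall x, a <= x <= b -> ctw (fun y => a <= y <= b) g x) ->
  (forall x, a < x < b -> derivable_pt_lim g x (g' x)) ->
  (forall x, a < x < b -> Rabs (g' x) <= B) ->
  Rabs (g b - g a) <= B * (b - a).
Proof.
  intros Hab Hc Hd HB.
  destruct (Req_dec a b) as [<-|Hne].
  { rewrite !Rminus_diag, Rabs_R0, Rmult_0_r; lra. }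
  assert (B0 : 0 <= B).
  { specialize (HB ((a+b)/2)). pose proof (Rabs_pos (g' ((a+b)/2))). assert (a < (a+b)/2 < b) by lra. specialize (HB H0). lra. }
  set (G := fun y => g (clamp a b y)).
  set (df := fun x => if Rlt_dec a x then if Rlt_dec x b then g' x else 0 else 0).
  destruct (MVT_gen G a b df) as [c [Hc1 Hc2]].
  - intros x Hx. rewrite Rmin_left, Rmax_right in Hx by auto.
    unfold df. destruct Rlt_dec; [|lra]. destruct Rlt_dec; [|lra].
    apply is_derive_ext_loc with g.
    + assert (Hm : 0 < Rmin (x - a) (b - x)) by (apply Rmin_pos; lra).
      exists (mkposreal _ Hm). intros t Ht. apply ballR in Ht. simpl in Ht.
      unfold G. rewrite clamp_id; auto.
      pose proof (Rmin_l (x-a) (b-x)). pose proof (Rmin_r (x-a) (b-x)).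
      change (Rabs (t - x) < Rmin (x - a) (b - x)) in Ht. apply Rabs_def2 in Ht. lra.
    + apply is_derive_Reals. apply Hd. lra.
  - intros x _. apply continuity_pt_filterlim. apply clamp_cont; auto.
  - unfold G in Hc2. rewrite !clamp_id in Hc2 by lra. rewrite Hc2.
    rewrite Rabs_mult, (Rabs_right (b - a)) by lra; simpl.
    apply Rmult_le_compat_r; [lra|].
    unfold df. destruct Rlt_dec; [destruct Rlt_dec|]; try (rewrite Rabs_R0; lra).
    apply HB; lra.
Qed.
Definition lipB (M : R) (h : R -> R) (L : R) : Prop :=
  forall y z, Rabs y <= M -> Rabs z <= M -> Rabs (h y - h z) <= L * Rabs (y - z).
Definition lipE (h : R -> R) : Prop := forall M, 0 <= M -> exists L, 0 <= L /\ lipB M h L.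

Lemma lipB_bound M h L y : 0 <= M -> 0 <= L -> lipB M h L -> Rabs y <= M -> Rabs (h y) <= Rabs (h 0) + L * M.
Proof.
  intros HM HL H Hy. replace (h y) with ((h y - h 0) + h 0) by ring.
  eapply Rle_trans; [apply Rabs_triang|].
  assert (Rabs (h y - h 0) <= L * M).
  { eapply Rle_trans; [apply H; auto; rewrite Rabs_R0; lra|]. rewrite Rminus_0_r.
    apply Rmult_le_compat_l; auto. }
  lra.
Qed.

Lemma lipE_const k : lipE (fun _ => k).
Proof. intros M HM. exists 0. split; [lra|]. intros y z _ _. rewrite Rminus_diag, Rabs_R0. lra. Qed.

Lemma lipE_id : lipE (fun r => r).
Proof. intros M HM. exists 1. split; [lra|]. intros y z _ _. lra. Qed.

Lemma lipE_plus f g : lipE f -> lipE g -> lipE (fun r => f r + g r).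
Proof.
  intros Hf Hg M HM. destruct (Hf M HM) as [L1 [H1 H1']]. destruct (Hg M HM) as [L2 [H2 H2']].
  exists (L1 + L2). split; [lra|]. intros y z Hy Hz.
  replace (f y + g y - (f z + g z)) with ((f y - f z) + (g y - g z)) by ring.
  eapply Rle_trans; [apply Rabs_triang|].
  specialize (H1' y z Hy Hz). specialize (H2' y z Hy Hz). lra.
Qed.

Lemma lipE_mult f g : lipE f -> lipE g -> lipE (fun r => f r * g r).
Proof.
  intros Hf Hg M HM. destruct (Hf M HM) as [L1 [H1 H1']]. destruct (Hg M HM) as [L2 [H2 H2']].
  set (Bf := Rabs (f 0) + L1 * M). set (Bg := Rabs (g 0) + L2 * M).
  assert (0 <= Bf) by (unfold Bf; pose proof (Rabs_pos (f 0)); pose proof (Rmult_le_pos _ _ H1 HM); lra).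
  assert (0 <= Bg) by (unfold Bg; pose proof (Rabs_pos (g 0)); pose proof (Rmult_le_pos _ _ H2 HM); lra).
  exists (Bf * L2 + Bg * L1). split.
  { pose proof (Rmult_le_pos _ _ H H2). pose proof (Rmult_le_pos _ _ H0 H1). lra. }
  intros y z Hy Hz.
  replace (f y * g y - f z * g z) with (f y * (g y - g z) + (f y - f z) * g z) by ring.
  eapply Rle_trans; [apply Rabs_triang|]. rewrite !Rabs_mult.
  pose proof (lipB_bound M f L1 y HM H1 H1' Hy) as Bfy.
  pose proof (lipB_bound M g L2 z HM H2 H2' Hz) as Bgz.
  specialize (H1' y z Hy Hz). specialize (H2' y z Hy Hz).
  assert (Rabs (f y) * Rabs (g y - g z) <= Bf * (L2 * Rabs (y - z))).
  { apply Rmult_le_compat; try apply Rabs_pos; auto. }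
  assert (Rabs (f y - f z) * Rabs (g z) <= (L1 * Rabs (y - z)) * Bg).
  { apply Rmult_le_compat; try apply Rabs_pos; auto. }
  nra.
Qed.

Lemma lipE_pow n : lipE (fun r => r ^ n).
Proof.
  induction n.
  - apply (lipE_const 1).
  - apply (lipE_mult (fun r => r) (fun r => r ^ n)); auto. apply lipE_id.
Qed.

Lemma lipE_ext f g : (forall r, f r = g r) -> lipE f -> lipE g.
Proof.
  intros E H M HM. destruct (H M HM) as [L [HL H']]. exists L; split; auto.
  intros y z Hy Hz. rewrite <- !E. auto.
Qed.

Lemma lipE_sum (F : nat -> R -> R) n : (forall p, lipE (F p)) ->
  forall k, lipE (fun r => sum_n_m (fun p => F p r) n k).
Proof.
  intros HF k. induction k.
  - destruct n.
    + apply lipE_ext with (F 0%nat); auto. intros r. rewrite sum_n_n. auto.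
    + apply lipE_ext with (fun _ => 0). intros r. rewrite sum_n_m_zero; auto; lia.
      apply lipE_const.
  - destruct (le_lt_dec n (S k)).
    + apply lipE_ext with (fun r => sum_n_m (fun p => F p r) n k + F (S k) r).
      intros r. rewrite sum_n_Sm; auto.
      apply lipE_plus; auto.
    + apply lipE_ext with (fun _ => 0). intros r. rewrite sum_n_m_zero; auto; lia.
      apply lipE_const.
Qed.

Lemma lipE_ctp h z : lipE h -> ctp h z.
Proof.
  intros H eps He. destruct (H (Rabs z + 1)) as [L [HL H']].
  { pose proof (Rabs_pos z); lra. }
  exists (Rmin 1 (eps / (L + 1))). split.
  { apply Rmin_pos; [lra|]. apply Rdiv_lt_0_compat; lra. }
  intros w Hw.
  assert (Hw1 : Rabs (w - z) < 1) by (eapply Rlt_le_trans; [exact Hw|apply Rmin_l]).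
  assert (Hw2 : Rabs (w - z) < eps / (L + 1)) by (eapply Rlt_le_trans; [exact Hw|apply Rmin_r]).
  assert (Rabs w <= Rabs z + 1).
  { replace w with ((w - z) + z) by ring. eapply Rle_trans; [apply Rabs_triang|]. lra. }
  eapply Rle_lt_trans; [apply H'; auto; lra|].
  apply Rle_lt_trans with ((L + 1) * Rabs (w - z)).
  { apply Rmult_le_compat_r; [apply Rabs_pos|lra]. }
  apply Rmult_lt_reg_l with (/ (L + 1)). apply Rinv_0_lt_compat; lra.
  rewrite <- Rmult_assoc, Rinv_l, Rmult_1_l by lra. rewrite Rmult_comm. exact Hw2.
Qed.

Lemma lipE_nu1 m b : lipE (nu1 m b).
Proof.
  unfold nu1. apply (lipE_sum (fun p r => INR p * b p ^ 2 * r ^ (p - 1))).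
  intros p. apply lipE_mult; [apply lipE_const|apply lipE_pow].
Qed.

Lemma lipE_nu2 m b : lipE (nu2 m b).
Proof.
  unfold nu2. apply (lipE_sum (fun p r => INR p * INR (p - 1) * b p ^ 2 * r ^ (p - 2))).
  intros p. apply lipE_mult; [apply lipE_const|apply lipE_pow].
Qed.

Lemma lipE_psi m b : lipE (psi m b).
Proof.
  unfold psi. apply lipE_plus; [apply lipE_mult|]; auto using lipE_id, lipE_nu2, lipE_nu1.
Qed.

Lemma lipE_vstar1 m b qs E G : lipE (vstar1 m b qs E G).
Proof.
  unfold vstar1. destruct excluded_middle_informative.
  - apply lipE_mult; [apply lipE_const|apply lipE_pow].
  - apply (lipE_sum (fun p r => INR p * b p ^ 2 * vcoef m b qs E G p * r ^ (p - 1))).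
    intros p. apply lipE_mult; [apply lipE_const|apply lipE_pow].
Qed.
Definition lip0 (c : R) (g : R -> R) (L : R) : Prop :=
  forall y z, 0 <= y <= c -> 0 <= z <= c -> Rabs (g y - g z) <= L * Rabs (y - z).

Lemma lip0_wlog c g L : (forall y z, 0 <= y <= c -> 0 <= z <= c -> y <= z -> Rabs (g y - g z) <= L * Rabs (y - z)) -> lip0 c g L.
Proof.
  intros H y z Hy Hz. destruct (Rle_dec y z); auto.
  rewrite (Rabs_minus_sym (g y)), (Rabs_minus_sym y). apply H; auto; lra.
Qed.

Lemma loclip_lip g :
  (forall x, 0 <= x -> exists delta L, 0 < delta /\
     forall y z, 0 <= y -> 0 <= z -> Rabs (y - x) < delta -> Rabs (z - x) < delta ->
       Rabs (g y - g z) <= L * Rabs (y - z)) ->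
  forall M, 0 <= M -> exists L, 0 <= L /\ lip0 M g L.
Proof.
  intros Hloc M HM.
  set (E := fun c => 0 <= c <= M /\ exists L, 0 <= L /\ lip0 c g L).
  assert (E0 : E 0).
  { split; [lra|]. exists 0. split; [lra|]. intros y z Hy Hz. replace y with 0 by lra. replace z with 0 by lra.
    rewrite Rminus_diag, Rabs_R0; lra. }
  destruct (completeness E) as [cs [Hub Hlub]].
  { exists M. intros c [Hc _]. lra. }
  { exists 0; auto. }
  assert (Hcs : 0 <= cs <= M).
  { split. apply Hub; auto. apply Hlub. intros c [Hc _]; lra. }
  destruct (Hloc cs (proj1 Hcs)) as [d [L0 [Hd HL0]]].
  destruct (Classical_Prop.classic (exists c, E c /\ cs - d/2 < c)) as [[c [Ec Hc]]|Hn].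
  2:{ exfalso. assert (cs <= cs - d/2); [|lra]. apply Hlub. intros c Ec.
      destruct (Rle_dec c (cs - d/2)); auto. exfalso; apply Hn; exists c; split; auto; lra. }
  assert (Hccs : c <= cs) by (apply Hub; auto).
  destruct Ec as [Hc0 [L1 [HL1 Hl1]]].
  set (c' := Rmin M (cs + d/2)).
  assert (Hc' : cs <= c' <= cs + d/2 /\ c' <= M).
  { unfold c'. pose proof (Rmin_l M (cs + d/2)). pose proof (Rmin_r M (cs + d/2)).
    unfold Rmin; destruct Rle_dec; lra. }
  set (L' := Rmax L1 (Rmax L0 0)).
  assert (HL' : L1 <= L' /\ L0 <= L' /\ 0 <= L').
  { unfold L'. pose proof (Rmax_l L1 (Rmax L0 0)). pose proof (Rmax_r L1 (Rmax L0 0)).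
    pose proof (Rmax_l L0 0). pose proof (Rmax_r L0 0). lra. }
  assert (Pc' : lip0 c' g L').
  { apply lip0_wlog. intros y z Hy Hz Hyz.
    destruct (Rle_dec z c).
    - eapply Rle_trans; [apply Hl1; lra|]. apply Rmult_le_compat_r; [apply Rabs_pos|lra].
    - destruct (Rle_dec y c).
      + replace (g y - g z) with ((g y - g c) + (g c - g z)) by ring.
        eapply Rle_trans; [apply Rabs_triang|].
        assert (A1 : Rabs (g y - g c) <= L1 * Rabs (y - c)) by (apply Hl1; lra).
        assert (A2 : Rabs (g c - g z) <= L0 * Rabs (c - z)).
        { apply HL0; try lra; apply Rabs_def1; lra. }
        rewrite (Rabs_left1 (y - c)) in A1 by lra.
        rewrite (Rabs_left1 (c - z)) in A2 by lra.
        rewrite (Rabs_left1 (y - z)) by lra.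
        assert (L1 * - (y - c) <= L' * - (y - c)) by (apply Rmult_le_compat_r; lra).
        assert (L0 * - (c - z) <= L' * - (c - z)) by (apply Rmult_le_compat_r; lra).
        lra.
      + eapply Rle_trans; [apply HL0; try lra; apply Rabs_def1; lra|].
        apply Rmult_le_compat_r; [apply Rabs_pos|lra]. }
  assert (Ec' : E c') by (split; [lra| exists L'; split; [lra|auto]]).
  assert (c' <= cs) by (apply Hub; auto).
  assert (c' = M).
  { unfold c' in *. unfold Rmin in *; destruct Rle_dec; lra. }
  exists L'. split; [lra|]. rewrite <- H0. auto.
Qed.
Definition bc (X a b c B : R) : Prop := Rabs (a - b) <= c * X /\ Rabs a <= B /\ Rabs b <= B.

Lemma bc_use X a b c B : bc X a b c B -> Rabs (a - b) <= c * X.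
Proof. intros [H _]; auto. Qed.

Lemma bc_const X k : bc X k k 0 (Rabs k).
Proof. split; [rewrite Rminus_diag, Rabs_R0; lra| split; lra]. Qed.

Lemma bc_plus X a1 b1 c1 B1 a2 b2 c2 B2 : bc X a1 b1 c1 B1 -> bc X a2 b2 c2 B2 ->
  bc X (a1 + a2) (b1 + b2) (c1 + c2) (B1 + B2).
Proof.
  intros [H1 [H1a H1b]] [H2 [H2a H2b]]. split; [|split].
  - replace (a1 + a2 - (b1 + b2)) with ((a1 - b1) + (a2 - b2)) by ring.
    eapply Rle_trans; [apply Rabs_triang|]. lra.
  - eapply Rle_trans; [apply Rabs_triang|]. lra.
  - eapply Rle_trans; [apply Rabs_triang|]. lra.
Qed.

Lemma bc_opp X a b c B : bc X a b c B -> bc X (- a) (- b) c B.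
Proof.
  intros [H [Ha Hb]]. split; [|split]; rewrite ?Rabs_Ropp; auto.
  replace (- a - - b) with (- (a - b)) by ring. rewrite Rabs_Ropp; auto.
Qed.

Lemma bc_minus X a1 b1 c1 B1 a2 b2 c2 B2 : bc X a1 b1 c1 B1 -> bc X a2 b2 c2 B2 ->
  bc X (a1 - a2) (b1 - b2) (c1 + c2) (B1 + B2).
Proof. intros H1 H2. apply bc_plus; auto. apply bc_opp; auto. Qed.

Lemma bc_mult X a1 b1 c1 B1 a2 b2 c2 B2 : 0 <= X -> bc X a1 b1 c1 B1 -> bc X a2 b2 c2 B2 ->
  bc X (a1 * a2) (b1 * b2) (B1 * c2 + B2 * c1) (B1 * B2).
Proof.
  intros HX [H1 [H1a H1b]] [H2 [H2a H2b]].
  assert (0 <= B1) by (pose proof (Rabs_pos a1); lra).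
  assert (0 <= B2) by (pose proof (Rabs_pos a2); lra).
  split; [|split].
  - replace (a1 * a2 - b1 * b2) with (a1 * (a2 - b2) + (a1 - b1) * b2) by ring.
    eapply Rle_trans; [apply Rabs_triang|]. rewrite !Rabs_mult.
    assert (Rabs a1 * Rabs (a2 - b2) <= B1 * (c2 * X)) by (apply Rmult_le_compat; auto using Rabs_pos).
    assert (Rabs (a1 - b1) * Rabs b2 <= (c1 * X) * B2) by (apply Rmult_le_compat; auto using Rabs_pos).
    nra.
  - rewrite Rabs_mult. apply Rmult_le_compat; auto using Rabs_pos.
  - rewrite Rabs_mult. apply Rmult_le_compat; auto using Rabs_pos.
Qed.

Lemma bc_div X a b c B k : 0 <= X -> bc X a b c B -> bc X (a / k) (b / k) (Rabs (/ k) * c + 0 * c) (B * Rabs (/ k)).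
Proof.
  intros HX H. unfold Rdiv.
  pose proof (bc_mult X a b c B (/ k) (/ k) 0 (Rabs (/ k)) HX H (bc_const X (/ k))).
  destruct H0 as [A [B' C']]. split; [|split]; auto.
  eapply Rle_trans; [exact A|]. right; ring.
Qed.

Lemma bc_lip X M h L a b c : 0 <= M -> 0 <= L -> lipB M h L -> bc X a b c M ->
  bc X (h a) (h b) (L * c) (Rabs (h 0) + L * M).
Proof.
  intros HM HL Hl [H [Ha Hb]]. split; [|split].
  - eapply Rle_trans; [apply Hl; auto|]. rewrite Rmult_assoc. apply Rmult_le_compat_l; auto.
  - apply lipB_bound; auto.
  - apply lipB_bound; auto.
Qed.

Lemma bc_lip0 X M h L a b c : 0 <= M -> 0 <= L -> lip0 M h L -> 0 <= a -> 0 <= b -> bc X a b c M ->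
  bc X (h a) (h b) (L * c) (Rabs (h 0) + L * M).
Proof.
  intros HM HL Hl Ha0 Hb0 [H [Ha Hb]].
  assert (a <= M) by (rewrite Rabs_right in Ha; lra).
  assert (b <= M) by (rewrite Rabs_right in Hb; lra).
  split; [|split].
  - eapply Rle_trans; [apply Hl; lra|]. rewrite Rmult_assoc. apply Rmult_le_compat_l; auto.
  - replace (h a) with ((h a - h 0) + h 0) by ring. eapply Rle_trans; [apply Rabs_triang|].
    assert (Rabs (h a - h 0) <= L * M).
    { eapply Rle_trans; [apply Hl; lra|]. rewrite Rminus_0_r, Rabs_right by lra. apply Rmult_le_compat_l; lra. }
    lra.
  - replace (h b) with ((h b - h 0) + h 0) by ring. eapply Rle_trans; [apply Rabs_triang|].
    assert (Rabs (h b - h 0) <= L * M).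
    { eapply Rle_trans; [apply Hl; lra|]. rewrite Rminus_0_r, Rabs_right by lra. apply Rmult_le_compat_l; lra. }
    lra.
Qed.

Lemma bc_RInt X T f1 f2 lo hi c B : 0 <= X -> ex_RInt f1 lo hi -> ex_RInt f2 lo hi -> 0 <= hi - lo <= T ->
  (forall u, lo <= u <= hi -> bc X (f1 u) (f2 u) c B) ->
  bc X (RInt f1 lo hi) (RInt f2 lo hi) (c * T) (B * T).
Proof.
  intros HX E1 E2 Hlh H.
  destruct (H lo) as [H0 [H0a H0b]]; [lra|].
  assert (Hc : 0 <= c * X) by (pose proof (Rabs_pos (f1 lo - f2 lo)); lra).
  assert (HB : 0 <= B) by (pose proof (Rabs_pos (f1 lo)); lra).
  split; [|split].
  - assert (Heq : RInt f1 lo hi - RInt f2 lo hi = RInt (fun u => f1 u - f2 u) lo hi).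
    { symmetry. apply (RInt_minus (V:=R_CompleteNormedModule)); auto. }
    rewrite Heq.
    eapply Rle_trans; [apply abs_RInt_le_const; try lra|].
    + apply (ex_RInt_minus (V:=R_NormedModule)); auto.
    + intros u Hu. apply (H u Hu).
    + replace (c * T * X) with (T * (c * X)) by ring. apply Rmult_le_compat_r; lra.
  - eapply Rle_trans; [apply abs_RInt_le_const; try lra; auto|].
    + intros u Hu. apply (H u Hu).
    + rewrite Rmult_comm. apply Rmult_le_compat_l; lra.
  - eapply Rle_trans; [apply abs_RInt_le_const; try lra; auto|].
    + intros u Hu. apply (H u Hu).
    + rewrite Rmult_comm. apply Rmult_le_compat_l; lra.
Qed.
Lemma tri_s T g t lo hi u : C1b_triangle T g -> 0 <= t -> t <= lo -> lo <= hi -> hi <= T -> lo <= u <= hi ->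
  ctw (fun y => lo <= y <= hi) (fun y => g y t) u.
Proof.
  intros [gs [gt [Hs _]]] Ht Hlo Hlh HhT Hu.
  assert (Dut : DeltaT T (u, t)) by (unfold DeltaT; simpl; lra).
  apply ctw_sub with (fun s' => DeltaT T (s', t)).
  { intros y Hy. unfold DeltaT; simpl; lra. }
  eapply derw_ctw; [exact Dut|]. apply deriv_derw. apply Hs; auto.
Qed.

Lemma tri_t T g s lo hi u : C1b_triangle T g -> 0 <= lo -> lo <= hi -> hi <= s -> s <= T -> lo <= u <= hi ->
  ctw (fun y => lo <= y <= hi) (fun y => g s y) u.
Proof.
  intros [gs [gt [_ [Ht _]]]] Hlo Hlh HhT HsT Hu.
  assert (Dut : DeltaT T (s, u)) by (unfold DeltaT; simpl; lra).
  apply ctw_sub with (fun t' => DeltaT T (s, t')).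
  { intros y Hy. unfold DeltaT; simpl; lra. }
  eapply derw_ctw; [exact Dut|]. apply deriv_derw. apply Ht; auto.
Qed.

Lemma int_c T g lo hi u : C1b_interval T g -> 0 <= lo -> lo <= hi -> hi <= T -> lo <= u <= hi ->
  ctw (fun y => lo <= y <= hi) g u.
Proof.
  intros [g' [Hd _]] Hlo Hlh HhT Hu.
  assert (Du : I0T T u) by (unfold I0T; lra).
  apply ctw_sub with (I0T T).
  { intros y Hy. unfold I0T; lra. }
  eapply derw_ctw; [exact Du|]. apply deriv_derw. apply Hd; auto.
Qed.

Lemma csym_row T C s lo hi u : C1b_triangle T C -> 0 <= lo -> lo <= hi -> hi <= s -> s <= T -> lo <= u <= hi ->
  ctw (fun y => lo <= y <= hi) (fun y => Csym C s y) u.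
Proof.
  intros. apply ctw_ext with (fun y => C s y); auto.
  - intros y Hy. unfold Csym. destruct Rle_dec; auto; lra.
  - eapply tri_t; eauto.
Qed.

Lemma csym_col1 T C t lo hi u : C1b_triangle T C -> 0 <= lo -> lo <= hi -> hi <= t -> t <= T -> lo <= u <= hi ->
  ctw (fun y => lo <= y <= hi) (fun y => Csym C y t) u.
Proof.
  intros. apply ctw_ext with (fun y => C t y); auto.
  - intros y Hy. unfold Csym. destruct Rle_dec; auto. replace y with t by lra. auto.
  - eapply tri_t; eauto.
Qed.

Lemma csym_col2 T C t lo hi u : C1b_triangle T C -> 0 <= t -> t <= lo -> lo <= hi -> hi <= T -> lo <= u <= hi ->
  ctw (fun y => lo <= y <= hi) (fun y => Csym C y t) u.
Proof.
  intros. apply ctw_ext with (fun y => C y t); auto.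
  - intros y Hy. unfold Csym. destruct Rle_dec; auto. lra.
  - eapply tri_s; eauto.
Qed.

Ltac ctwt m b :=
  repeat (unfold Rdiv; first
    [ apply ctw_const
    | apply ctw_plus
    | apply ctw_minus
    | apply ctw_opp
    | apply ctw_mult
    | (apply (ctw_comp _ _ (nu1 m b)); [|apply lipE_ctp, lipE_nu1])
    | (apply (ctw_comp _ _ (nu2 m b)); [|apply lipE_ctp, lipE_nu2])
    | (apply (ctw_comp _ _ (psi m b)); [|apply lipE_ctp, lipE_psi])
    ]).

Lemma sol_integrable m b qs qo E G fp T Rf C q K H s t :
  is_solution m b qs qo E G fp T Rf C q K H -> 0 <= t -> t <= s -> s <= T ->
  ex_RInt (fun u => Rf u t * Rf s u * nu2 m b (Csym C s u)) t s /\
  ex_RInt (fun u => Rf s u * (nu2 m b (Csym C s u) * Csym C u t -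
           q t * nu1 m b (q u) * nu2 m b (q s) / nu1 m b (qs ^ 2))) 0 s /\
  ex_RInt (fun u => Rf t u * (nu1 m b (Csym C s u) -
           nu1 m b (q s) * nu1 m b (q u) / nu1 m b (qs ^ 2))) 0 t /\
  ex_RInt (fun u => Rf s u * (q u * nu2 m b (Csym C s u) -
           qs ^ 2 * nu1 m b (q u) * nu2 m b (q s) / nu1 m b (qs ^ 2))) 0 s /\
  ex_RInt (fun u => Rf s u * (psi m b (Csym C s u) -
           psi m b (q s) * nu1 m b (q u) / nu1 m b (qs ^ 2))) 0 s.
Proof.
  intros Hsol Ht Hts HsT.
  unfold is_solution in Hsol. cbv zeta in Hsol.
  destruct Hsol as (HR & HC & Hq & _).
  split; [|split; [|split; [|split]]].
  - apply ex_RInt_ctw; auto. intros u Hu. ctwt m b.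
    + eapply tri_s; eauto; lra.
    + eapply tri_t; eauto; lra.
    + eapply csym_row; eauto; lra.
  - apply (ex_RInt_Chasles _ 0 t s).
    + apply ex_RInt_ctw; auto. intros u Hu. ctwt m b;
      first [eapply tri_t; eauto; lra | eapply csym_row; eauto; lra | eapply csym_col1; eauto; lra | eapply int_c; eauto; lra].
    + apply ex_RInt_ctw; auto. intros u Hu. ctwt m b;
      first [eapply tri_t; eauto; lra | eapply csym_row; eauto; lra | eapply csym_col2; eauto; lra | eapply int_c; eauto; lra].
  - apply ex_RInt_ctw; auto. intros u Hu. ctwt m b;
    first [eapply tri_t; eauto; lra | eapply csym_row; eauto; lra | eapply int_c; eauto; lra].
  - apply ex_RInt_ctw; [lra|]. intros u Hu. ctwt m b;
    first [eapply tri_t; eauto; lra | eapply csym_row; eauto; lra | eapply int_c; eauto; lra].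
  - apply ex_RInt_ctw; [lra|]. intros u Hu. ctwt m b;
    first [eapply tri_t; eauto; lra | eapply csym_row; eauto; lra | eapply int_c; eauto; lra].
Qed.
Lemma deriv_interior D g x l : is_deriv_within D g x l ->
  (exists rho, 0 < rho /\ forall y, Rabs (y - x) < rho -> D y) -> derivable_pt_lim g x l.
Proof.
  intros Hd [rho [Hrho HD]]. apply deriv_derw in Hd.
  intros eps He. destruct (Hd eps He) as [d [Hd0 Hd']].
  assert (Hm : 0 < Rmin d rho) by (apply Rmin_pos; auto).
  exists (mkposreal _ Hm). intros h Hh Hhd. simpl in Hhd.
  assert (Hh1 : Rabs h < d) by (eapply Rlt_le_trans; [exact Hhd|apply Rmin_l]).
  assert (Hh2 : Rabs h < rho) by (eapply Rlt_le_trans; [exact Hhd|apply Rmin_r]).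
  replace h with ((x + h) - x) at 2 by ring.
  apply Hd'.
  - apply HD. replace (x + h - x) with h by ring. auto.
  - intro E. apply Hh. lra.
  - replace (x + h - x) with h by ring. auto.
Qed.

Lemma diff_bound (D : R -> Prop) g1 g2 l1 l2 lo s B : lo <= s ->
  (forall y, lo <= y <= s -> D y) ->
  (forall x, lo < x < s -> exists rho, 0 < rho /\ forall y, Rabs (y - x) < rho -> D y) ->
  (forall x, lo <= x <= s -> is_deriv_within D g1 x (l1 x)) ->
  (forall x, lo <= x <= s -> is_deriv_within D g2 x (l2 x)) ->
  (forall x, lo < x < s -> Rabs (l1 x - l2 x) <= B) ->
  Rabs ((g1 s - g2 s) - (g1 lo - g2 lo)) <= B * (s - lo).
Proof.
  intros Hls HD Hint H1 H2 HB.
  apply (mvt_bound (fun y => g1 y - g2 y) (fun y => l1 y - l2 y)); auto.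
  - intros x Hx. apply ctw_minus.
    + apply ctw_sub with D; [intros; apply HD; auto|]. eapply derw_ctw; [apply HD; auto|]. apply deriv_derw, H1; auto.
    + apply ctw_sub with D; [intros; apply HD; auto|]. eapply derw_ctw; [apply HD; auto|]. apply deriv_derw, H2; auto.
  - intros x Hx. apply (derivable_pt_lim_minus g1 g2).
    + eapply deriv_interior; [apply H1; lra|]. apply Hint; auto.
    + eapply deriv_interior; [apply H2; lra|]. apply Hint; auto.
Qed.

Lemma interior_I0T T lo s x : 0 <= lo -> s <= T -> lo < x < s ->
  exists rho, 0 < rho /\ forall y, Rabs (y - x) < rho -> I0T T y.
Proof.
  intros. exists (Rmin (x - 0) (T - x)). split; [apply Rmin_pos; lra|].
  intros y Hy. pose proof (Rmin_l (x - 0) (T - x)). pose proof (Rmin_r (x - 0) (T - x)).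
  apply Rabs_def2 in Hy. unfold I0T. lra.
Qed.

Lemma interior_Delta T t lo s x : 0 <= t -> t <= lo -> s <= T -> lo < x < s ->
  exists rho, 0 < rho /\ forall y, Rabs (y - x) < rho -> DeltaT T (y, t).
Proof.
  intros. exists (Rmin (x - t) (T - x)). split; [apply Rmin_pos; lra|].
  intros y Hy. pose proof (Rmin_l (x - t) (T - x)). pose proof (Rmin_r (x - t) (T - x)).
  apply Rabs_def2 in Hy. unfold DeltaT; simpl. lra.
Qed.

Definition rhsR m b fp (Rf C : R -> R -> R) (K : R -> R) s t :=
  - fp (K s) * Rf s t + RInt (fun u => Rf u t * Rf s u * nu2 m b (Csym C s u)) t s.
Definition rhsC m b qs E G fp (Rf C : R -> R -> R) (q K : R -> R) s t :=
       - fp (K s) * C s t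
       + RInt (fun u : R => Rf s u * (nu2 m b (Csym C s u) * Csym C u t -
           q t * nu1 m b (q u) * nu2 m b (q s) / nu1 m b (qs ^ 2))) 0 s
       + RInt (fun u : R => Rf t u * (nu1 m b (Csym C s u) -
           nu1 m b (q s) * nu1 m b (q u) / nu1 m b (qs ^ 2))) 0 t
       + q t * vstar1 m b qs E G (q s).
Definition rhsq m b qs E G fp (Rf C : R -> R -> R) (q K : R -> R) s :=
       - fp (K s) * q s +
       RInt (fun u : R => Rf s u * (q u * nu2 m b (Csym C s u) -
           qs ^ 2 * nu1 m b (q u) * nu2 m b (q s) / nu1 m b (qs ^ 2))) 0 s +
       qs ^ 2 * vstar1 m b qs E G (q s).
Definition rhsK m b qs E G fp (Rf C : R -> R -> R) (q K : R -> R) s :=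
       1 - 2 * fp (K s) * K s +
       2 * RInt (fun u : R => Rf s u * (psi m b (Csym C s u) -
           psi m b (q s) * nu1 m b (q u) / nu1 m b (qs ^ 2))) 0 s +
       2 * q s * vstar1 m b qs E G (q s).

Definition HXp T (R1 R2 C1 C2 : R -> R -> R) (q1 q2 K1 K2 : R -> R) X bnd : Prop :=
  (forall s t, DeltaT T (s, t) -> s <= bnd -> Rabs (R1 s t - R2 s t) <= X /\ Rabs (C1 s t - C2 s t) <= X) /\
  (forall s, I0T T s -> s <= bnd -> Rabs (q1 s - q2 s) <= X /\ Rabs (K1 s - K2 s) <= X).
Ltac bct T fp M Lf L1 L2 Lp Lv m b qs E G R1 R2 C1 C2 q1 q2 K1 K2 bR bC bCs bq bK :=
  repeat match goal with
  | |- bc _ ?a ?a _ _ => apply bc_const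
  | |- bc _ (_ + _) (_ + _) _ _ => eapply bc_plus
  | |- bc _ (_ - _) (_ - _) _ _ => eapply bc_minus
  | |- bc _ (- _) (- _) _ _ => eapply bc_opp
  | |- bc _ (_ / _) (_ / _) _ _ => eapply bc_div; [assumption|]
  | |- bc _ (_ * _) (_ * _) _ _ => eapply bc_mult; [assumption| |]
  | |- bc _ (RInt _ _ _) (RInt _ _ _) _ _ => eapply (bc_RInt _ T); [assumption | | | | intros ?u ?Hu; cbv beta]
  | |- bc ?X (fp _) (fp _) _ _ => eapply (bc_lip0 X M fp Lf); [assumption|assumption|assumption| | | ]
  | |- bc ?X (nu1 m b _) (nu1 m b _) _ _ => eapply (bc_lip X M (nu1 m b) L1); [assumption|assumption|assumption| ]
  | |- bc ?X (nu2 m b _) (nu2 m b _) _ _ => eapply (bc_lip X M (nu2 m b) L2); [assumption|assumption|assumption| ]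
  | |- bc ?X (psi m b _) (psi m b _) _ _ => eapply (bc_lip X M (psi m b) Lp); [assumption|assumption|assumption| ]
  | |- bc ?X (vstar1 m b qs E G _) (vstar1 m b qs E G _) _ _ =>
      eapply (bc_lip X M (vstar1 m b qs E G) Lv); [assumption|assumption|assumption| ]
  | |- bc _ (R1 _ _) (R2 _ _) _ _ => eapply bR
  | |- bc _ (C1 _ _) (C2 _ _) _ _ => eapply bC
  | |- bc _ (Csym C1 _ _) (Csym C2 _ _) _ _ => eapply bCs
  | |- bc _ (q1 _) (q2 _) _ _ => eapply bq
  | |- bc _ (K1 _) (K2 _) _ _ => eapply bK
  end.

Lemma rhs_close m b qs qo E G fp T R1 C1 q1 K1 H1 R2 C2 q2 K2 H2 M Lf L1 L2 Lp Lv :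
  is_solution m b qs qo E G fp T R1 C1 q1 K1 H1 ->
  is_solution m b qs qo E G fp T R2 C2 q2 K2 H2 ->
  0 <= M -> 0 <= T ->
  (forall s t, DeltaT T (s, t) -> Rabs (R1 s t) <= M /\ Rabs (R2 s t) <= M /\ Rabs (C1 s t) <= M /\ Rabs (C2 s t) <= M) ->
  (forall s, I0T T s -> Rabs (q1 s) <= M /\ Rabs (q2 s) <= M /\ Rabs (K1 s) <= M /\ Rabs (K2 s) <= M) ->
  0 <= Lf -> lip0 M fp Lf ->
  0 <= L1 -> lipB M (nu1 m b) L1 ->
  0 <= L2 -> lipB M (nu2 m b) L2 ->
  0 <= Lp -> lipB M (psi m b) Lp ->
  0 <= Lv -> lipB M (vstar1 m b qs E G) Lv ->
  exists cR cC cq cK, forall X bnd, 0 <= X -> HXp T R1 R2 C1 C2 q1 q2 K1 K2 X bnd ->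
   (forall s t, DeltaT T (s, t) -> s <= bnd ->
      Rabs (rhsR m b fp R1 C1 K1 s t - rhsR m b fp R2 C2 K2 s t) <= cR * X) /\
   (forall s t, DeltaT T (s, t) -> s <= bnd ->
      Rabs (rhsC m b qs E G fp R1 C1 q1 K1 s t - rhsC m b qs E G fp R2 C2 q2 K2 s t) <= cC * X) /\
   (forall s, I0T T s -> s <= bnd ->
      Rabs (rhsq m b qs E G fp R1 C1 q1 K1 s - rhsq m b qs E G fp R2 C2 q2 K2 s) <= cq * X) /\
   (forall s, I0T T s -> s <= bnd ->
      Rabs (rhsK m b qs E G fp R1 C1 q1 K1 s - rhsK m b qs E G fp R2 C2 q2 K2 s) <= cK * X).
Proof.
  intros S1 S2 HM HT BRC Bqk HLf Hf HL1 Hl1 HL2 Hl2 HLp Hlp HLv Hlv.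
  assert (nn1 : forall s, I0T T s -> 0 <= K1 s) by (apply S1).
  assert (nn2 : forall s, I0T T s -> 0 <= K2 s) by (apply S2).
  do 4 eexists. intros X bnd HX0 [HXa HXb].
  assert (bR : forall s t, DeltaT T (s, t) -> s <= bnd -> bc X (R1 s t) (R2 s t) 1 M).
  { intros s t H H'. destruct (BRC s t H) as (? & ? & ? & ?). destruct (HXa s t H H').
    split; [lra|split; auto]. }
  assert (bC : forall s t, DeltaT T (s, t) -> s <= bnd -> bc X (C1 s t) (C2 s t) 1 M).
  { intros s t H H'. destruct (BRC s t H) as (? & ? & ? & ?). destruct (HXa s t H H').
    split; [lra|split; auto]. }
  assert (bq : forall s, I0T T s -> s <= bnd -> bc X (q1 s) (q2 s) 1 M).
  { intros s H H'. destruct (Bqk s H) as (? & ? & ? & ?). destruct (HXb s H H').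
    split; [lra|split; auto]. }
  assert (bK : forall s, I0T T s -> s <= bnd -> bc X (K1 s) (K2 s) 1 M).
  { intros s H H'. destruct (Bqk s H) as (? & ? & ? & ?). destruct (HXb s H H').
    split; [lra|split; auto]. }
  assert (bCs : forall s u, 0 <= s <= T -> 0 <= u <= T -> s <= bnd -> u <= bnd ->
            bc X (Csym C1 s u) (Csym C2 s u) 1 M).
  { intros s u Hs Hu Hsb Hub. unfold Csym. destruct Rle_dec.
    - apply bC; auto. unfold DeltaT; simpl; lra.
    - apply bC; auto. unfold DeltaT; simpl; lra. }
  split; [|split; [|split]].
  - intros s t Hst Hsb. eapply bc_use. unfold rhsR.
    assert (Hst' := Hst). unfold DeltaT in Hst'; simpl in Hst'.
    destruct (sol_integrable _ _ _ _ _ _ _ _ _ _ _ _ _ s t S1) as (I1 & _); try lra.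
    destruct (sol_integrable _ _ _ _ _ _ _ _ _ _ _ _ _ s t S2) as (I2 & _); try lra.
    bct T fp M Lf L1 L2 Lp Lv m b qs E G R1 R2 C1 C2 q1 q2 K1 K2 bR bC bCs bq bK;
    try first [apply nn1; unfold I0T; lra | apply nn2; unfold I0T; lra | assumption | (unfold DeltaT, I0T in *; simpl in *; lra) ].
  - intros s t Hst Hsb. eapply bc_use. unfold rhsC.
    assert (Hst' := Hst). unfold DeltaT in Hst'; simpl in Hst'.
    destruct (sol_integrable _ _ _ _ _ _ _ _ _ _ _ _ _ s t S1) as (_ & I1 & I1' & _); try lra.
    destruct (sol_integrable _ _ _ _ _ _ _ _ _ _ _ _ _ s t S2) as (_ & I2 & I2' & _); try lra.
    bct T fp M Lf L1 L2 Lp Lv m b qs E G R1 R2 C1 C2 q1 q2 K1 K2 bR bC bCs bq bK;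
    try first [apply nn1; unfold I0T; lra | apply nn2; unfold I0T; lra | assumption | (unfold DeltaT, I0T in *; simpl in *; lra) ].
  - intros s Hs Hsb. eapply bc_use. unfold rhsq.
    assert (Hs' := Hs). unfold I0T in Hs'.
    destruct (sol_integrable _ _ _ _ _ _ _ _ _ _ _ _ _ s s S1) as (_ & _ & _ & I1 & _); try lra.
    destruct (sol_integrable _ _ _ _ _ _ _ _ _ _ _ _ _ s s S2) as (_ & _ & _ & I2 & _); try lra.
    bct T fp M Lf L1 L2 Lp Lv m b qs E G R1 R2 C1 C2 q1 q2 K1 K2 bR bC bCs bq bK;
    try first [apply nn1; unfold I0T; lra | apply nn2; unfold I0T; lra | assumption | (unfold DeltaT, I0T in *; simpl in *; lra) ].
  - intros s Hs Hsb. eapply bc_use. unfold rhsK.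
    assert (Hs' := Hs). unfold I0T in Hs'.
    destruct (sol_integrable _ _ _ _ _ _ _ _ _ _ _ _ _ s s S1) as (_ & _ & _ & _ & I1); try lra.
    destruct (sol_integrable _ _ _ _ _ _ _ _ _ _ _ _ _ s s S2) as (_ & _ & _ & _ & I2); try lra.
    bct T fp M Lf L1 L2 Lp Lv m b qs E G R1 R2 C1 C2 q1 q2 K1 K2 bR bC bCs bq bK;
    try first [apply nn1; unfold I0T; lra | apply nn2; unfold I0T; lra | assumption | (unfold DeltaT, I0T in *; simpl in *; lra) ].
Qed.
Lemma archi_step d s : 0 < d -> 0 <= s -> exists N : nat, s <= INR N * d.
Proof.
  intros Hd Hs. destruct (archimed_cor1 (d / (s + 1))) as [N [H1 H2]].
  { apply Rdiv_lt_0_compat; lra. }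
  exists N. assert (Hn : 0 < INR N) by (apply lt_0_INR; auto).
  assert (H3 : / INR N * (INR N * (s + 1)) < d / (s + 1) * (INR N * (s + 1))).
  { apply Rmult_lt_compat_r; auto. apply Rmult_lt_0_compat; lra. }
  replace (/ INR N * (INR N * (s + 1))) with (s + 1) in H3 by (field; lra).
  replace (d / (s + 1) * (INR N * (s + 1))) with (INR N * d) in H3 by (field; lra).
  lra.
Qed.

Lemma zero_of_geo d K : 0 <= K -> (forall n, Rabs d <= K * (1/2) ^ n) -> d = 0.
Proof.
  intros HK H. destruct (Req_dec d 0) as [|Hne]; auto. exfalso.
  assert (Hd : 0 < Rabs d) by (apply Rabs_pos_lt; auto).
  destruct (pow_lt_1_zero (1/2)) with (Rabs d / (K + 1)) as [N HN].
  { rewrite Rabs_right; lra. }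
  { apply Rdiv_lt_0_compat; lra. }
  specialize (HN N (Nat.le_refl N)). specialize (H N).
  rewrite Rabs_right in HN by (apply Rle_ge, pow_le; lra).
  assert (K * (1/2) ^ N <= K * (Rabs d / (K + 1))) by (apply Rmult_le_compat_l; lra).
  assert (K * (Rabs d / (K + 1)) < Rabs d).
  { apply Rmult_lt_reg_r with (K + 1); [lra|]. replace (K * (Rabs d / (K + 1)) * (K + 1)) with (K * Rabs d) by (field; lra). nra. }
  lra.
Qed.

Theorem proposition3p4
  (m : nat) (b : nat -> R) (qs qo E G : R) (f fp : R -> R) (T : R) :
  (2 <= m)%nat -> b m <> 0 -> 0 < qs ->
  (is_pure m b -> G = INR m * E / qs ^ 2) ->
  f_assumptions m f fp ->
  forall (R1 C1 : R -> R -> R) (q1 K1 H1 : R -> R)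
         (R2 C2 : R -> R -> R) (q2 K2 H2 : R -> R),
  is_solution m b qs qo E G fp T R1 C1 q1 K1 H1 ->
  is_solution m b qs qo E G fp T R2 C2 q2 K2 H2 ->
  (forall s t, DeltaT T (s, t) -> R1 s t = R2 s t /\ C1 s t = C2 s t) /\
  (forall s, I0T T s -> q1 s = q2 s /\ K1 s = K2 s /\ H1 s = H2 s).
Proof.
  intros Hm Hbm Hqs Hpure Hf R1 C1 q1 K1 H1 R2 C2 q2 K2 H2 S1 S2.
  destruct (Rlt_dec T 0) as [HTn|HT].
  { split; intros; unfold DeltaT, I0T in *; simpl in *; exfalso; lra. }
  assert (HT0 : 0 <= T) by lra. clear HT.
  pose proof S1 as S1'. unfold is_solution in S1'. cbv zeta in S1'.
  destruct S1' as (HR1 & HC1 & Hq1 & HK1 & HH1 & HK01 & ER1 & EC1 & Eq1 & EK1 & EH1 & Ed1 & EK01 & Eq01).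
  pose proof S2 as S2'. unfold is_solution in S2'. cbv zeta in S2'.
  destruct S2' as (HR2 & HC2 & Hq2 & HK2 & HH2 & HK02 & ER2 & EC2 & Eq2 & EK2 & EH2 & Ed2 & EK02 & Eq02).
  destruct HR1 as (gA1 & gB1 & _ & _ & _ & MR1 & HMR1).
  destruct HR2 as (gA2 & gB2 & _ & _ & _ & MR2 & HMR2).
  destruct HC1 as (gA3 & gB3 & _ & _ & _ & MC1 & HMC1).
  destruct HC2 as (gA4 & gB4 & _ & _ & _ & MC2 & HMC2).
  destruct Hq1 as (gA5 & _ & _ & Mq1 & HMq1).
  destruct Hq2 as (gA6 & _ & _ & Mq2 & HMq2).
  destruct HK1 as (gA7 & _ & _ & MK1 & HMK1).
  destruct HK2 as (gA8 & _ & _ & MK2 & HMK2).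
  set (M := Rabs MR1 + Rabs MR2 + Rabs MC1 + Rabs MC2 + Rabs Mq1 + Rabs Mq2 + Rabs MK1 + Rabs MK2).
  assert (HM : 0 <= M).
  { unfold M. pose proof (Rabs_pos MR1). pose proof (Rabs_pos MR2). pose proof (Rabs_pos MC1).
    pose proof (Rabs_pos MC2). pose proof (Rabs_pos Mq1). pose proof (Rabs_pos Mq2).
    pose proof (Rabs_pos MK1). pose proof (Rabs_pos MK2). lra. }
  assert (BRC : forall s t, DeltaT T (s, t) -> Rabs (R1 s t) <= M /\ Rabs (R2 s t) <= M /\ Rabs (C1 s t) <= M /\ Rabs (C2 s t) <= M).
  { intros s t H. destruct (HMR1 s t H) as [A1 _]. destruct (HMR2 s t H) as [A2 _].
    destruct (HMC1 s t H) as [A3 _]. destruct (HMC2 s t H) as [A4 _].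
    unfold M. pose proof (Rabs_pos MR1). pose proof (Rabs_pos MR2). pose proof (Rabs_pos MC1).
    pose proof (Rabs_pos MC2). pose proof (Rabs_pos Mq1). pose proof (Rabs_pos Mq2).
    pose proof (Rabs_pos MK1). pose proof (Rabs_pos MK2).
    pose proof (Rle_abs MR1). pose proof (Rle_abs MR2). pose proof (Rle_abs MC1). pose proof (Rle_abs MC2).
    lra. }
  assert (Bqk : forall s, I0T T s -> Rabs (q1 s) <= M /\ Rabs (q2 s) <= M /\ Rabs (K1 s) <= M /\ Rabs (K2 s) <= M).
  { intros s H. destruct (HMq1 s H) as [A1 _]. destruct (HMq2 s H) as [A2 _].
    destruct (HMK1 s H) as [A3 _]. destruct (HMK2 s H) as [A4 _].
    unfold M. pose proof (Rabs_pos MR1). pose proof (Rabs_pos MR2). pose proof (Rabs_pos MC1).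
    pose proof (Rabs_pos MC2). pose proof (Rabs_pos Mq1). pose proof (Rabs_pos Mq2).
    pose proof (Rabs_pos MK1). pose proof (Rabs_pos MK2).
    pose proof (Rle_abs Mq1). pose proof (Rle_abs Mq2). pose proof (Rle_abs MK1). pose proof (Rle_abs MK2).
    lra. }
  destruct Hf as (_ & Hloc & _).
  destruct (loclip_lip fp Hloc M HM) as [Lf [HLf Hlf]].
  destruct (lipE_nu1 m b M HM) as [L1 [HL1 Hl1]].
  destruct (lipE_nu2 m b M HM) as [L2 [HL2 Hl2]].
  destruct (lipE_psi m b M HM) as [Lp [HLp Hlp]].
  destruct (lipE_vstar1 m b qs E G M HM) as [Lv [HLv Hlv]].
  destruct (rhs_close m b qs qo E G fp T R1 C1 q1 K1 H1 R2 C2 q2 K2 H2 M Lf L1 L2 Lp Lv)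
    as (cR & cC & cq & cK & Hc); auto.
  set (c := Rabs cR + Rabs cC + Rabs cq + Rabs cK).
  assert (Hc0 : 0 <= c).
  { unfold c. pose proof (Rabs_pos cR). pose proof (Rabs_pos cC). pose proof (Rabs_pos cq). pose proof (Rabs_pos cK). lra. }
  assert (HcR : cR <= c /\ cC <= c /\ cq <= c /\ cK <= c).
  { unfold c. pose proof (Rabs_pos cR). pose proof (Rabs_pos cC). pose proof (Rabs_pos cq). pose proof (Rabs_pos cK).
    pose proof (Rle_abs cR). pose proof (Rle_abs cC). pose proof (Rle_abs cq). pose proof (Rle_abs cK). lra. }
  set (del := 1 / (4 * c + 4)).
  assert (Hdel : 0 < del) by (unfold del; apply Rdiv_lt_0_compat; lra).
  assert (Hcdel : 2 * c * del <= 1 / 2).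
  { unfold del. apply Rmult_le_reg_r with (4 * c + 4); [lra|].
    replace (2 * c * (1 / (4 * c + 4)) * (4 * c + 4)) with (2 * c) by (field; lra). lra. }
  set (Z := fun a => (forall s t, DeltaT T (s, t) -> s <= a -> R1 s t = R2 s t /\ C1 s t = C2 s t) /\
                     (forall s, I0T T s -> s <= a -> q1 s = q2 s /\ K1 s = K2 s)).
  assert (Half : forall a X, 0 <= a -> Z a -> 0 <= X ->
            HXp T R1 R2 C1 C2 q1 q2 K1 K2 X (a + del) ->
            HXp T R1 R2 C1 C2 q1 q2 K1 K2 (X / 2) (a + del)).
  { intros a X Ha [Za1 Za2] HX0 HXX.
    destruct (Hc X (a + del) HX0 HXX) as (cRb & cCb & cqb & cKb).
    assert (cX0 : 0 <= c * X) by (apply Rmult_le_pos; lra).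
    assert (cXd : 0 <= c * X * del) by (apply Rmult_le_pos; lra).
    assert (KB : forall s, I0T T s -> s <= a + del -> Rabs (K1 s - K2 s) <= c * X * del).
    { intros s Hs Hsb. destruct (Rle_dec s a) as [Hsa|Hsa].
      - destruct (Za2 s Hs Hsa) as [_ ->]. rewrite Rminus_diag, Rabs_R0; auto.
      - assert (Ia : I0T T a) by (unfold I0T in *; lra).
        destruct (Za2 a Ia (Rle_refl a)) as [_ Ea].
        pose proof (diff_bound (I0T T) K1 K2 (rhsK m b qs E G fp R1 C1 q1 K1)
                      (rhsK m b qs E G fp R2 C2 q2 K2) a s (c * X)) as D.
        rewrite Ea, Rminus_diag, Rminus_0_r in D.
        eapply Rle_trans; [apply D|].
        + lra.
        + intros y Hy. unfold I0T in *; lra.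
        + intros x Hx. apply interior_I0T with a s; unfold I0T in *; lra.
        + intros x Hx. apply EK1. unfold I0T in *; lra.
        + intros x Hx. apply EK2. unfold I0T in *; lra.
        + intros x Hx. eapply Rle_trans; [apply cKb; unfold I0T in *; lra|].
          apply Rmult_le_compat_r; lra.
        + apply Rmult_le_compat_l; lra. }
    assert (QB : forall s, I0T T s -> s <= a + del -> Rabs (q1 s - q2 s) <= c * X * del).
    { intros s Hs Hsb. destruct (Rle_dec s a) as [Hsa|Hsa].
      - destruct (Za2 s Hs Hsa) as [-> _]. rewrite Rminus_diag, Rabs_R0; auto.
      - assert (Ia : I0T T a) by (unfold I0T in *; lra).
        destruct (Za2 a Ia (Rle_refl a)) as [Ea _].
        pose proof (diff_bound (I0T T) q1 q2 (rhsq m b qs E G fp R1 C1 q1 K1)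
                      (rhsq m b qs E G fp R2 C2 q2 K2) a s (c * X)) as D.
        rewrite Ea, Rminus_diag, Rminus_0_r in D.
        eapply Rle_trans; [apply D|].
        + lra.
        + intros y Hy. unfold I0T in *; lra.
        + intros x Hx. apply interior_I0T with a s; unfold I0T in *; lra.
        + intros x Hx. apply Eq1. unfold I0T in *; lra.
        + intros x Hx. apply Eq2. unfold I0T in *; lra.
        + intros x Hx. eapply Rle_trans; [apply cqb; unfold I0T in *; lra|].
          apply Rmult_le_compat_r; lra.
        + apply Rmult_le_compat_l; lra. }
    assert (RB : forall s t, DeltaT T (s, t) -> s <= a + del -> Rabs (R1 s t - R2 s t) <= c * X * del).
    { intros s t Hst Hsb. assert (Hst' := Hst). unfold DeltaT in Hst'; simpl in Hst'.
      destruct (Rle_dec s a) as [Hsa|Hsa].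
      - destruct (Za1 s t Hst Hsa) as [-> _]. rewrite Rminus_diag, Rabs_R0; auto.
      - set (lo := if Rle_dec t a then a else t).
        assert (Hlo : t <= lo /\ a <= lo /\ lo <= s) by (unfold lo; destruct Rle_dec; lra).
        assert (Elo : R1 lo t = R2 lo t).
        { unfold lo; destruct Rle_dec.
          - apply Za1; [unfold DeltaT; simpl; lra| lra].
          - destruct (Ed1 t) as [-> _]; [unfold I0T; lra|]. destruct (Ed2 t) as [-> _]; [unfold I0T; lra|]. auto. }
        pose proof (diff_bound (fun s' => DeltaT T (s', t)) (fun s' => R1 s' t) (fun s' => R2 s' t)
                      (fun s' => rhsR m b fp R1 C1 K1 s' t)
                      (fun s' => rhsR m b fp R2 C2 K2 s' t) lo s (c * X)) as D.
        cbv beta in D. rewrite Elo, Rminus_diag, Rminus_0_r in D.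
        eapply Rle_trans; [apply D|].
        + lra.
        + intros y Hy. unfold DeltaT; simpl; lra.
        + intros x Hx. apply interior_Delta with lo s; lra.
        + intros x Hx. apply ER1. unfold DeltaT; simpl; lra.
        + intros x Hx. apply ER2. unfold DeltaT; simpl; lra.
        + intros x Hx. eapply Rle_trans; [apply cRb; [unfold DeltaT; simpl|]; lra|].
          apply Rmult_le_compat_r; lra.
        + apply Rmult_le_compat_l; lra. }
    assert (CB : forall s t, DeltaT T (s, t) -> s <= a + del -> Rabs (C1 s t - C2 s t) <= 2 * (c * X * del)).
    { intros s t Hst Hsb. assert (Hst' := Hst). unfold DeltaT in Hst'; simpl in Hst'.
      destruct (Rle_dec s a) as [Hsa|Hsa].
      - destruct (Za1 s t Hst Hsa) as [_ ->]. rewrite Rminus_diag, Rabs_R0; lra.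
      - set (lo := if Rle_dec t a then a else t).
        assert (Hlo : t <= lo /\ a <= lo /\ lo <= s) by (unfold lo; destruct Rle_dec; lra).
        assert (Elo : Rabs (C1 lo t - C2 lo t) <= c * X * del).
        { unfold lo; destruct Rle_dec.
          - destruct (Za1 a t) as [_ ->]; [unfold DeltaT; simpl; lra| lra|]. rewrite Rminus_diag, Rabs_R0; lra.
          - destruct (Ed1 t) as [_ ->]; [unfold I0T; lra|]. destruct (Ed2 t) as [_ ->]; [unfold I0T; lra|].
            apply KB; unfold I0T; lra. }
        pose proof (diff_bound (fun s' => DeltaT T (s', t)) (fun s' => C1 s' t) (fun s' => C2 s' t)
                      (fun s' => rhsC m b qs E G fp R1 C1 q1 K1 s' t)
                      (fun s' => rhsC m b qs E G fp R2 C2 q2 K2 s' t) lo s (c * X)) as D.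
        cbv beta in D.
        assert (D' : Rabs (C1 s t - C2 s t - (C1 lo t - C2 lo t)) <= c * X * (s - lo)).
        { apply D.
          + lra.
          + intros y Hy. unfold DeltaT; simpl; lra.
          + intros x Hx. apply interior_Delta with lo s; lra.
          + intros x Hx. apply EC1. unfold DeltaT; simpl; lra.
          + intros x Hx. apply EC2. unfold DeltaT; simpl; lra.
          + intros x Hx. eapply Rle_trans; [apply cCb; [unfold DeltaT; simpl|]; lra|].
            apply Rmult_le_compat_r; lra. }
        assert (c * X * (s - lo) <= c * X * del) by (apply Rmult_le_compat_l; lra).
        replace (C1 s t - C2 s t) with ((C1 s t - C2 s t - (C1 lo t - C2 lo t)) + (C1 lo t - C2 lo t)) by ring.
        eapply Rle_trans; [apply Rabs_triang|]. lra. }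
    assert (Hfin : 2 * (c * X * del) <= X / 2).
    { assert (2 * c * del * X <= 1 / 2 * X) by (apply Rmult_le_compat_r; lra). lra. }
    split.
    - intros s t H Hs. split; [pose proof (RB s t H Hs)|pose proof (CB s t H Hs)]; lra.
    - intros s H Hs. split; [pose proof (QB s H Hs)|pose proof (KB s H Hs)]; lra. }
  assert (Step : forall a, 0 <= a -> Z a -> Z (a + del)).
  { intros a Ha Za.
    assert (HX0 : HXp T R1 R2 C1 C2 q1 q2 K1 K2 (2 * M) (a + del)).
    { split.
      - intros s t H _. destruct (BRC s t H) as (A1 & A2 & A3 & A4).
        split; eapply Rle_trans; try apply Rabs_triang; rewrite Rabs_Ropp; lra.
      - intros s H _. destruct (Bqk s H) as (A1 & A2 & A3 & A4).
        split; eapply Rle_trans; try apply Rabs_triang; rewrite Rabs_Ropp; lra. }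
    assert (HXn : forall n, HXp T R1 R2 C1 C2 q1 q2 K1 K2 (2 * M * (1/2) ^ n) (a + del)).
    { induction n.
      - simpl. rewrite Rmult_1_r. auto.
      - replace (2 * M * (1/2) ^ S n) with (2 * M * (1/2) ^ n / 2) by (simpl; field).
        apply Half; auto. apply Rmult_le_pos; [lra|]. apply pow_le; lra. }
    split.
    - intros s t H Hs. split.
      + assert (R1 s t - R2 s t = 0); [|lra]. apply zero_of_geo with (2 * M); [lra|].
        intros n. apply (HXn n); auto.
      + assert (C1 s t - C2 s t = 0); [|lra]. apply zero_of_geo with (2 * M); [lra|].
        intros n. apply (HXn n); auto.
    - intros s H Hs. split.
      + assert (q1 s - q2 s = 0); [|lra]. apply zero_of_geo with (2 * M); [lra|].
        intros n. apply (HXn n); auto.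
      + assert (K1 s - K2 s = 0); [|lra]. apply zero_of_geo with (2 * M); [lra|].
        intros n. apply (HXn n); auto. }
  assert (Z0 : Z 0).
  { split.
    - intros s t H Hs. unfold DeltaT in H; simpl in H.
      assert (s = 0) by lra. assert (t = 0) by lra. subst s t.
      assert (I0 : I0T T 0) by (unfold I0T; lra).
      destruct (Ed1 0 I0) as [-> ->]. destruct (Ed2 0 I0) as [-> ->]. rewrite EK01, EK02. auto.
    - intros s H Hs. unfold I0T in H. assert (s = 0) by lra. subst s.
      rewrite EK01, EK02, Eq01, Eq02. auto. }
  assert (Zn : forall n, Z (INR n * del)).
  { induction n.
    - simpl. rewrite Rmult_0_l. auto.
    - rewrite S_INR. replace ((INR n + 1) * del) with (INR n * del + del) by ring.
      apply Step; auto. apply Rmult_le_pos; [apply pos_INR|lra]. }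
  assert (ZR : forall s t, DeltaT T (s, t) -> R1 s t = R2 s t /\ C1 s t = C2 s t).
  { intros s t H. assert (H' := H). unfold DeltaT in H'; simpl in H'.
    destruct (archi_step del s) as [N HN]; [lra|lra|].
    apply (proj1 (Zn N)); auto. }
  assert (Zq : forall s, I0T T s -> q1 s = q2 s /\ K1 s = K2 s).
  { intros s H. assert (H' := H). unfold I0T in H'.
    destruct (archi_step del s) as [N HN]; [lra|lra|].
    apply (proj2 (Zn N)); auto. }
  split; auto.
  intros s Hs. destruct (Zq s Hs) as [Eq Ek]. split; [auto|split; [auto|]].
  rewrite EH1, EH2 by auto. rewrite Eq. f_equal.
  apply RInt_ext. intros u Hu. unfold I0T in Hs.
  rewrite Rmin_left, Rmax_right in Hu by lra.
  assert (Hsu : DeltaT T (s, u)) by (unfold DeltaT; simpl; lra).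
  destruct (ZR s u Hsu) as [E1 E2].
  assert (E3 : Csym C1 s u = Csym C2 s u) by (unfold Csym; destruct Rle_dec; [auto|lra]).
  assert (E4 : q1 u = q2 u) by (apply Zq; unfold I0T; lra).
  rewrite E1, E3, E4. reflexivity.
Qed.
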